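(* Let $m$ and $k$ be odd integers with $k\ge3$ and $m\ge 2k+3$. Then $\mathrm{msum}(mk,k)\ge2$.
   Context: For positive integers $n>k$, let $S_n$ be the set of permutations $\pi=(\pi_1,\dots,\pi_n)$ of $1,\dots,n$, with cyclic indexing $\pi_{n+i}=\pi_i$, and $s_i=\sum_{j=0}^{k-1}\pi_{i+j}$ for $i=1,\dots,n$. Define $\mathrm{msum}(\pi,k)=\max_{1\le i\le n}s_i-\frac{k(n+1)}{2}$ and $\mathrm{msum}(n,k)=\min_{\pi\in S_n}\mathrm{msum}(\pi,k)$. *)

(* Defs.v *)
From HB Require Import structures.
From mathcomp Require Import all_boot all_order all_algebra all_fingroup.
Set Implicit Arguments. Unset Strict Implicit. Unset Printing Implicit Defensive.
Import Order.TTheory GRing.Theory Num.Theory.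
Local Open Scope ring_scope.

(* A permutation pi of {1,...,n} is represented by p : 'S_n (a permutation of
   'I_n = {0,...,n-1}) via pi_{x+1} = (p x) + 1.  Cyclic indexing: position x
   (0-based, any natural) denotes pi_{(x mod n)+1}. *)
Definition pval (n : nat) (p : 'S_n) (x : nat) : nat :=
  match @insub nat (fun y => (y < n)%N) 'I_n (x %% n)%N with
  | Some o => ((p o).+1)%N
  | None => 0
  end.

(* s_{i+1} = sum_{j=0}^{k-1} pi_{i+1+j}, for 0-based i *)
Definition wsum (n k : nat) (p : 'S_n) (i : nat) : nat :=
  \sum_(j < k) pval p (i + j).

Definition msum_perm (n k : nat) (p : 'S_n) : rat :=
  ((\max_(i < n) wsum k p i)%N)%:R - ((k * (n + 1))%N)%:R / 2%:R.

Definition msum (n k : nat) : rat :=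
  \big[Order.min/msum_perm k (1 : 'S_n)]_(p : 'S_n) msum_perm k p.

(* Main.v *)
Require Import Defs.
From HB Require Import structures.
From mathcomp Require Import all_boot all_order all_algebra all_fingroup.
From mathcomp Require Import zify.
Import Order.TTheory GRing.Theory Num.Theory.
Set Implicit Arguments. Unset Strict Implicit. Unset Printing Implicit Defensive.

Definition dist (x y : nat) : nat := (x - y) + (y - x).

Lemma sum_shift (N : nat) (g : nat -> nat) (x : nat) :
  (forall y, g (y + N) = g y) ->
  \sum_(i < N) g (x + i) = \sum_(i < N) g i.
Proof.
move=> gP; elim: x => [|x IH]; first by apply: eq_bigr => i _; rewrite add0n.
rewrite -IH; case: N gP {IH} => [|N] gP; first by rewrite !big_ord0.
rewrite big_ord_recr big_ord_recl /= addn0 addnC.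
have -> : x.+1 + N = x + N.+1 by lia.
rewrite gP; congr (_ + _); apply: eq_bigr => i _ /=.
by rewrite /bump /= add1n addSn addnS.
Qed.

Lemma sum_split (a b : nat) (F : nat -> nat) :
  \sum_(t < a + b) F t = \sum_(t < a) F t + \sum_(t < b) F (a + t).
Proof. by rewrite big_split_ord. Qed.

Lemma per_mul (N : nat) (g : nat -> nat) : (forall y, g (y + N) = g y) ->
  forall r q, g (r + q * N) = g r.
Proof.
move=> gP r; elim=> [|q IH]; first by rewrite addn0.
by rewrite mulSn (addnC N) addnA gP IH.
Qed.

Lemma per_mod (N : nat) (g : nat -> nat) : (forall y, g (y + N) = g y) ->
  forall y, g y = g (y %% N).
Proof. by move=> gP y; rewrite {1}(divn_eq y N) addnC per_mul. Qed.

Lemma per_rep (N : nat) (g : nat -> nat) : 0 < N -> (forall y, g (y + N) = g y) ->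
  forall x y, exists2 d, d < N & g (x + d) = g y.
Proof.
move=> N0 gP x y.
have Hx := divn_eq x N; have Hy := divn_eq y N.
have x' := ltn_pmod x N0; have y' := ltn_pmod y N0.
rewrite (per_mod gP y).
set q := x %/ N in Hx; set xr := x %% N in Hx x'; set yr := y %% N in Hy y' *.
case: (leqP xr yr) => Hxy.
  exists (yr - xr); first lia.
  have -> : x + (yr - xr) = yr + q * N by lia.
  by rewrite per_mul.
exists (yr + N - xr); first lia.
have -> : x + (yr + N - xr) = yr + q.+1 * N by rewrite mulSn; lia.
by rewrite per_mul.
Qed.
Definition CH (b : nat -> bool) (x d : nat) : nat :=
  \sum_(t < d) (b (x + t) != b (x + t).+1).

Lemma CH_split (b : nat -> bool) x d e : CH b x (d + e) = CH b x d + CH b (x + d) e.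
Proof.
rewrite /CH (sum_split d e (fun t => nat_of_bool (b (x + t) != b (x + t).+1))); congr (_ + _); apply: eq_bigr => i _; by rewrite addnA.
Qed.

Lemma CH_lb (b : nat -> bool) x d : (b x != b (x + d)) <= CH b x d.
Proof.
elim: d => [|d IH]; first by rewrite addn0 eqxx.
rewrite /CH big_ord_recr /= -/(CH b x d).
apply: leq_trans (leq_add IH (leqnn _)).
rewrite addnS.
by case: (b x); case: (b (x + d)); case: (b (x + d).+1).
Qed.

Lemma CH_cyc (b : nat -> bool) N x : (forall y, b (y + N) = b y) ->
  \sum_(t < N) (b t != b t.+1) = CH b x N.
Proof.
move=> bP; rewrite /CH.
rewrite (sum_shift (g := fun t => nat_of_bool (b t != b t.+1))) //.
by move=> y /=; rewrite bP -addSn bP.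
Qed.

Lemma chg_two (b : nat -> bool) N x d : (forall y, b (y + N) = b y) -> d <= N ->
  (b x != b (x + d)) * 2 <= \sum_(t < N) (b t != b t.+1).
Proof.
move=> bP dN; rewrite (CH_cyc x bP).
have -> : N = d + (N - d) by lia.
rewrite CH_split muln2 -addnn; apply: leq_add; first exact: CH_lb.
apply: leq_trans (CH_lb _ _ _).
have -> : x + d + (N - d) = x + N by lia.
by rewrite bP eq_sym.
Qed.

Lemma chg_four (b : nat -> bool) N x d : (forall y, b (y + N) = b y) -> 1 < d -> d < N.-1 ->
  b x -> ~~ b (x + 1) -> ~~ b (x + N.-1) -> b (x + d) ->
  4 <= \sum_(t < N) (b t != b t.+1).
Proof.
move=> bP d1 dN bx bx1 bxN bxd; rewrite (CH_cyc x bP).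
have -> : N = 1 + (d - 1) + (N.-1 - d) + 1 by lia.
rewrite !CH_split.
have h1 := CH_lb b x 1.
have h2 := CH_lb b (x + 1) (d - 1).
have h3 := CH_lb b (x + 1 + (d - 1)) (N.-1 - d).
have h4 := CH_lb b (x + 1 + (d - 1) + (N.-1 - d)) 1.
have e1 : x + 1 + (d - 1) = x + d by lia.
have e2 : x + d + (N.-1 - d) = x + N.-1 by lia.
have e3 : x + N.-1 + 1 = x + N by lia.
rewrite e1 e2 e3 bP in h1 h2 h3 h4 *.
move: h1 h2 h3 h4; rewrite bx (negbTE bx1) (negbTE bxN) bxd /=.
rewrite !addnA e1 e2.
lia.
Qed.

Lemma inj_count (m : nat) (a : nat -> nat) u :
  (forall i j, i < m -> j < m -> a i = a j -> i = j) ->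
  \sum_(l < m) (a l == u) <= 1.
Proof.
elim: m => [|m IH] inj; first by rewrite big_ord0.
rewrite big_ord_recr /=.
case: eqP => [Hm|_]; last first.
  by rewrite addn0; apply: IH => i j Hi Hj; apply: inj; lia.
rewrite big1 // => i _.
case: eqP => // Hi; exfalso.
have := inj i m (ltnW (ltn_ord i)) (ltnSn m); rewrite Hm Hi => /(_ erefl) E.
by have := ltn_ord i; rewrite E ltnn.
Qed.

Lemma sum_eq1 w c K : \sum_(v < K) (w == c + v.+1) = (c < w <= c + K).
Proof.
elim: K => [|K IH].
  rewrite big_ord0 addn0; case: (ltnP c w) => //= H; apply/esym/negbTE; rewrite -ltnNge //.
rewrite big_ord_recr /= IH.
case: (ltnP c w) => Hc /=; last by case: eqP => //; lia.
case: (leqP w (c + K)) => H1; case: eqP => H2 //=; try lia.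
all: case: leqP; lia.
Qed.

Lemma count_int (m : nat) (a : nat -> nat) lo hi :
  (forall i j, i < m -> j < m -> a i = a j -> i = j) ->
  \sum_(l < m) (lo < a l <= hi) <= hi - lo.
Proof.
move=> inj.
have E : forall l : 'I_m, nat_of_bool (lo < a l <= hi) <= \sum_(v < hi - lo) (a l == lo + v.+1).
  move=> l; rewrite sum_eq1; case: (ltnP lo (a l)) => H0 //=.
  case: (leqP (a l) hi) => //= H.
  by have -> : a l <= lo + (hi - lo) by lia.
apply: leq_trans (leq_sum _ (fun l _ => E l)) _.
rewrite exchange_big /=.
apply: (@leq_trans (\sum_(j < hi - lo) 1)).
  by apply: leq_sum => v _; exact: inj_count.
by rewrite sum1_card card_ord.
Qed.

Lemma count_between (m : nat) (a : nat -> nat) x y :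
  (forall i j, i < m -> j < m -> a i = a j -> i = j) ->
  \sum_(l < m) ((a l <= x) != (a l <= y)) <= dist x y.
Proof.
move=> inj; rewrite /dist.
case: (leqP x y) => Hxy.
  apply: leq_trans (leq_trans _ (count_int x y inj)) (leq_addl _ _).
  apply: leq_sum => l _.
  by case: (leqP (a l) x) => H1; case: (leqP (a l) y) => H2 //=; lia.
apply: leq_trans (leq_trans _ (count_int y x inj)) (leq_addr _ _).
apply: leq_sum => l _.
by case: (leqP (a l) x) => H1; case: (leqP (a l) y) => H2 //=; lia.
Qed.

Lemma dist_sym x y : dist x y = dist y x.
Proof. by rewrite /dist addnC. Qed.

Lemma shift1 (m : nat) (g : nat -> nat) : (forall y, g (y + m) = g y) ->
  \sum_(l < m) g l.+1 = \sum_(l < m) g l.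
Proof.
move=> gP; rewrite -(sum_shift 1 gP); apply: eq_bigr => l _; by rewrite add1n.
Qed.

Lemma G_lemma (m : nat) (a : nat -> nat) : 0 < m -> (forall y, a (y + m) = a y) ->
  (forall i j, i < m -> j < m -> a i = a j -> i = j) ->
  2 * m <= \sum_(j < m) dist (a j) (a j.+1) + 2 /\
  2 * m + 2 * \sum_(j < m) ((a j < a j.+1) && (a j.+2 < a j.+1))
     <= \sum_(j < m) dist (a j) (a j.+1) + 4.
Proof.
move=> m0 aP inj.
have [lmin Hlmin minP] : exists2 lmin, lmin < m & forall l, a lmin <= a l.
  case: (@arg_minnP _ (Ordinal m0) xpredT (fun i : 'I_m => a i) isT) => i _ Hi.
  exists i => // l; rewrite (per_mod aP l); exact: (Hi (Ordinal (ltn_pmod l m0))).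
have [lmax Hlmax maxP] : exists2 lmax, lmax < m & forall l, a l <= a lmax.
  case: (@arg_maxnP _ (Ordinal m0) xpredT (fun i : 'I_m => a i) isT) => i _ Hi.
  exists i => // l; rewrite (per_mod aP l); exact: (Hi (Ordinal (ltn_pmod l m0))).
pose X v := \sum_(j < m) ((v <= a j) != (v <= a j.+1)).
have TVlb : \sum_(l < m) X (a l) <= \sum_(j < m) dist (a j) (a j.+1).
  rewrite /X exchange_big /=; apply: leq_sum => j _; exact: count_between.
have Xsh : \sum_(l < m) X (a l.+1) = \sum_(l < m) X (a l).
  by rewrite (shift1 (g := fun l => X (a l))) // => y; rewrite aP.
have cnt (u : nat) : \sum_(l < m) (a l.+1 == u) <= 1.
  rewrite (shift1 (g := fun l => nat_of_bool (a l == u))); first exact: inj_count.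
  by move=> y /=; rewrite aP.
have B1 : forall l, 2 <= X (a l.+1) + 2 * (a l.+1 == a lmin).
  move=> l; case: eqP => [_|Hne]; first by rewrite muln1 leq_addl.
  rewrite muln0 addn0.
  have [d Hd Ed] := per_rep m0 aP l.+1 lmin.
  have := @chg_two (fun j => a l.+1 <= a j) m l.+1 d (fun y => ltac:(by rewrite /= aP)) (ltnW Hd).
  rewrite /= Ed leqnn.
  have -> : (a l.+1 <= a lmin) = false.
    by apply/negbTE; rewrite -ltnNge ltn_neqAle minP andbT eq_sym; apply/eqP.
  by [].
have B2 : forall l, 2 + 2 * ((a l < a l.+1) && (a l.+2 < a l.+1)) <=
    X (a l.+1) + 2 * (a l.+1 == a lmin) + 2 * (a l.+1 == a lmax).
  move=> l; case: (boolP ((a l < a l.+1) && (a l.+2 < a l.+1))) => [/andP [H1 H2]|_].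
    have Hmin : (a l.+1 == a lmin) = false.
      by have ml := minP l; apply/negbTE/eqP => E; lia.
    rewrite Hmin muln0 addn0.
    case: eqP => [_|Hne]; first by have := B1 l; rewrite Hmin; lia.
    rewrite muln0 addn0.
    have [d Hd Ed] := per_rep m0 aP l.+1 lmax.
    have Hgt : a l.+1 < a lmax by rewrite ltn_neqAle maxP andbT; apply/eqP.
    have d0 : d != 0 by apply/eqP => d0; move: Ed; rewrite d0 addn0 => E; lia.
    have d1 : d != 1 by apply/eqP => d1; move: Ed; rewrite d1 addn1 => E; lia.
    have dm : d != m.-1.
      apply/eqP => dm; move: Ed; rewrite dm.
      have -> : l.+1 + m.-1 = l + m by lia.
      rewrite aP => E; lia.
    have := @chg_four (fun j => a l.+1 <= a j) m l.+1 d
      (fun y => ltac:(by rewrite /= aP)).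
    have -> : l.+1 + m.-1 = l + m by lia.
    rewrite /= aP Ed addn1 leqnn (ltnW Hgt) -!ltnNge H1 H2.
    move/eqP: d0 => d0; move/eqP: d1 => d1; move/eqP: dm => dm.
    move=> /(_ ltac:(lia) ltac:(lia) isT isT isT isT) H4.
    by rewrite /X /= muln1.
  rewrite muln0 addn0; apply: leq_trans (B1 l) _; exact: leq_addr.
have S2 : \sum_(l < m) (2 + 2 * ((a l < a l.+1) && (a l.+2 < a l.+1))) <=
    \sum_(l < m) (X (a l.+1) + 2 * (a l.+1 == a lmin) + 2 * (a l.+1 == a lmax)).
  by apply: leq_sum => l _; exact: B2.
rewrite !big_split /= -?big_distrr /= ?sum_nat_const ?card_ord Xsh in S2.
have S1 : \sum_(l < m) 2 <= \sum_(l < m) (X (a l.+1) + 2 * (a l.+1 == a lmin)).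
  by apply: leq_sum => l _; exact: B1.
rewrite !big_split /= -?big_distrr /= ?sum_nat_const ?card_ord Xsh in S1.
have c1 := cnt (a lmin); have c2 := cnt (a lmax).
clearbody X.
move: S1 S2 c1 c2 TVlb.
set Y := \sum_(l < m) X (a l).
set c1 := \sum_(l < m) (a l.+1 == a lmin).
set c2 := \sum_(l < m) (a l.+1 == a lmax).
set P := \sum_(j < m) ((a j < a j.+1) && (a j.+2 < a j.+1)).
set T := \sum_(j < m) dist (a j) (a j.+1).
split; lia.
Qed.

Lemma G_valley (m N : nat) (a : nat -> nat) : 0 < m -> (forall y, a (y + m) = a y) ->
  (forall i j, i < m -> j < m -> a i = a j -> i = j) -> (forall j, a j <= N) ->
  2 * m + 2 * \sum_(j < m) ((a j.+1 < a j) && (a j.+1 < a j.+2))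
     <= \sum_(j < m) dist (a j) (a j.+1) + 4.
Proof.
move=> m0 aP inj aN.
have [_ H] := @G_lemma m (fun j => N - a j) m0 (fun y => ltac:(by rewrite /= aP))
  (fun i j Hi Hj E => inj i j Hi Hj ltac:(have := aN i; have := aN j; lia)).
move: H.
have -> : \sum_(j < m) dist (N - a j) (N - a j.+1) = \sum_(j < m) dist (a j) (a j.+1).
  apply: eq_bigr => j _; rewrite /dist; have := aN j; have := aN j.+1; lia.
have -> : \sum_(j < m) ((N - a j < N - a j.+1) && (N - a j.+2 < N - a j.+1)) =
          \sum_(j < m) ((a j.+1 < a j) && (a j.+1 < a j.+2)).
  apply: eq_bigr => j _; have := aN j; have := aN j.+1; have := aN j.+2.
  move=> h1 h2 h3; congr (nat_of_bool (_ && _)); apply/idP/idP; lia.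
by [].
Qed.

Lemma sum_reindex (m k : nat) (g : nat -> nat) :
  \sum_(i < m * k) g i = \sum_(j < m) \sum_(t < k) g (j * k + t).
Proof.
elim: m => [|m IH]; first by rewrite mul0n !big_ord0.
rewrite mulSnr (sum_split (m * k) k g) IH big_ord_recr /=.
by [].
Qed.

Lemma sum_reindex2 (m k : nat) (g : nat -> nat) :
  \sum_(i < m * k) g i = \sum_(c < k) \sum_(j < m) g (c + j * k).
Proof.
rewrite sum_reindex exchange_big /=; apply: eq_bigr => c _; apply: eq_bigr => j _.
by rewrite addnC.
Qed.

Lemma parity (sg : nat -> bool) i d :
  (forall e, e < d -> sg (i + e) != sg (i + e).+1) -> sg (i + d) = sg i (+) odd d.
Proof.
elim: d => [|d IH] H; first by rewrite addn0 addbF.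
rewrite addnS /=.
have Hd := H d (ltnSn d).
rewrite IH in Hd *; last by move=> e He; apply: H; exact: ltnW.
by move: Hd; case: (sg (i + d).+1); case: (sg i); case: (odd d).
Qed.

Lemma window_step (f : nat -> nat) i k : 0 < k ->
  \sum_(j < k) f (i.+1 + j) + f i = \sum_(j < k) f (i + j) + f (i + k).
Proof.
case: k => [|k'] // _.
rewrite big_ord_recr big_ord_recl /= addn0 addnC addnS.
rewrite addnA addSn; congr (_ + _ + _); apply: eq_bigr => j _.
by rewrite /bump /= add1n addSn addnS.
Qed.

Lemma core (m k q : nat) (f : nat -> nat) :
  odd k -> 3 <= k -> 2 * k + 3 <= m ->
  (forall y, f (y + m * k) = f y) ->
  (forall x y, x < m * k -> y < m * k -> f x = f y -> x = y) ->
  (forall x, f x <= m * k) ->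
  \sum_(i < m * k) f i = m * k * q ->
  (forall i, \sum_(j < k) f (i + j) <= k * q + 1) ->
  False.
Proof.
move=> ko k3 mk fP finj fN fsum sle.
set n := m * k in fP finj fN fsum.
have n0 : 0 < n by rewrite /n; nia.
have kn : k < n by rewrite /n; nia.
pose s i := \sum_(j < k) f (i + j).
pose h i := k * q + 1 - s i.
have sP y : s (y + n) = s y.
  by apply: eq_bigr => j _; rewrite -addnA (addnC n) addnA fP.
have hP y : h (y + n) = h y by rewrite /h sP.
have F1 i : h i.+1 + f (i + k) = h i + f i.
  have s1 := sle i; have s2 := sle i.+1.
  have E : s i.+1 + f i = s i + f (i + k).
    by rewrite /s window_step //; lia.
  rewrite /h -/(s i) -/(s i.+1) in s1 s2 *; lia.
have F2 c : \sum_(j < m) h (c + j * k) = m.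
  have E1 : \sum_(j < m) s (c + j * k) = n * q.
    rewrite -fsum -(sum_shift c fP) /n (sum_reindex m k (fun i => f (c + i))).
    by apply: eq_bigr => j _; apply: eq_bigr => t _; rewrite addnA.
  have E2 : \sum_(j < m) (h (c + j * k) + s (c + j * k)) = m * (k * q + 1).
    have -> : m * (k * q + 1) = \sum_(j < m) (k * q + 1) by rewrite sum_nat_const card_ord.
    apply: eq_bigr => j _.
    by have := sle (c + j * k); rewrite /h -/(s _); lia.
  rewrite big_split /= E1 in E2.
  move: E2; set H := \sum_(j < m) _; rewrite /n; nia.
have fdist x : f x <> f (x + k).
  move=> E; rewrite (per_mod fP x) (per_mod fP (x + k)) in E.
  have := finj _ _ (ltn_pmod x n0) (ltn_pmod (x + k) n0) E.
  rewrite -modnDml; set r := x %% n; have rn : r < n by apply: ltn_pmod.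
  case: (ltnP (r + k) n) => H; first by rewrite modn_small //; lia.
  have -> : r + k = (r + k - n) + n by lia.
  by rewrite modnDr modn_small; lia.
pose sg i := f i < f (i + k).
have class c : c < k ->
  \sum_(j < m) (sg (c + j * k) != sg (c + j * k + k)) +
    2 * \sum_(j < m) minn (h (c + j * k)) (h (c + j * k).+1) <= 4 /\
  \sum_(j < m) minn (h (c + j * k)) (h (c + j * k).+1) <= 1.
  move=> ck.
  pose a j := f (c + j * k).
  have m0 : 0 < m by lia.
  have aP y : a (y + m) = a y by rewrite /a mulnDl addnA fP.
  have ainj i j : i < m -> j < m -> a i = a j -> i = j.
    move=> Hi Hj E; have := finj (c + i * k) (c + j * k).
    rewrite /n => /(_ ltac:(nia) ltac:(nia) E) /addnI /eqP.
    by rewrite eqn_pmul2r; [move/eqP | lia].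
  have aN j : a j <= n by apply: fN.
  have [G1 G2] := G_lemma m0 aP ainj.
  have G3 := G_valley m0 aP ainj aN.
  have aS j : a j.+1 = f (c + j * k + k) by rewrite /a mulSn; congr f; lia.
  have aSS j : a j.+2 = f (c + j * k + k + k) by rewrite /a !mulSn; congr f; lia.
  have TM : \sum_(j < m) dist (a j) (a j.+1) +
      2 * \sum_(j < m) minn (h (c + j * k)) (h (c + j * k).+1) = 2 * m.
    rewrite big_distrr -big_split /=.
    have -> : 2 * m = \sum_(j < m) h (c + j * k) + \sum_(j < m) h (c.+1 + j * k).
      by rewrite !F2; lia.
    rewrite -big_split /=; apply: eq_bigr => j _.
    rewrite aS /a addSn; have := F1 (c + j * k); rewrite /dist; lia.
  have PV : \sum_(j < m) ((a j < a j.+1) && (a j.+2 < a j.+1)) +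
            \sum_(j < m) ((a j.+1 < a j) && (a j.+1 < a j.+2)) =
            \sum_(j < m) (sg (c + j * k) != sg (c + j * k + k)).
    rewrite -big_split /=; apply: eq_bigr => j _.
    rewrite aS aSS /a /sg.
    have := fdist (c + j * k); have := fdist (c + j * k + k).
    set x := f (c + j * k); set y := f (c + j * k + k); set z := f (c + j * k + k + k).
    move=> h1 h2.
    by case: (ltngtP x y) => H1; case: (ltngtP y z) => H2 //=; lia.
  move: G1 G2 G3 TM PV.
  set T := \sum_(j < m) dist (a j) (a j.+1).
  set P := \sum_(j < m) ((a j < a j.+1) && (a j.+2 < a j.+1)).
  set V := \sum_(j < m) ((a j.+1 < a j) && (a j.+1 < a j.+2)).
  set M := \sum_(j < m) minn _ _.
  set D := \sum_(j < m) _.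
  lia.
have DM : \sum_(i < n) (sg i != sg (i + k)) + 2 * \sum_(i < n) minn (h i) (h i.+1) <= 4 * k /\
          \sum_(i < n) minn (h i) (h i.+1) <= k.
  rewrite /n (sum_reindex2 m k (fun i => nat_of_bool (sg i != sg (i + k))))
             (sum_reindex2 m k (fun i => minn (h i) (h i.+1))).
  split.
    rewrite big_distrr -big_split /=.
    have -> : 4 * k = \sum_(c < k) 4 by rewrite sum_nat_const card_ord mulnC.
    by apply: leq_sum => c _; have [H _] := class c (ltn_ord c).
  apply: (@leq_trans (\sum_(c < k) 1)); last by rewrite sum_nat_const card_ord muln1.
  by apply: leq_sum => c _; have [_ H] := class c (ltn_ord c).
pose Q t := (0 < h t) && (0 < h t.+1).
have EQ t : (sg t == sg t.+1) <= Q t + Q t.+1.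
  rewrite /sg /Q.
  have := F1 t; have := F1 t.+1; have := fdist t; have := fdist t.+1.
  rewrite addSn.
  move=> d1 d0 e1 e0.
  by case: (ltngtP (f t) (f (t + k))) => H1; case: (ltngtP (f t.+1) (f (t + k).+1)) => H2 //=;
  case: (posnP (h t)) => ?; case: (posnP (h t.+1)) => ?; case: (posnP (h t.+2)) => ? /=; lia.
have PAR i : (sg i == sg (i + k)) <= \sum_(d < k) (sg (i + d) == sg (i + d).+1).
  case: (posnP (\sum_(d < k) (sg (i + d) == sg (i + d).+1))) => H; last first.
    exact: leq_trans (leq_b1 _) H.
  move/eqP: H; rewrite sum_nat_eq0 => /forallP H.
  rewrite (@parity sg i k); last first.
    by move=> e He; move: (H (Ordinal He)); rewrite /= eqb0.
  by rewrite ko addbT; case: (sg i).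
have NC : \sum_(i < n) (sg i == sg (i + k)) <= 2 * k * \sum_(i < n) Q i.
  apply: (@leq_trans (\sum_(i < n) \sum_(d < k) (Q (i + d) + Q (i + d).+1))).
    apply: leq_sum => i _; apply: leq_trans (PAR i) _.
    by apply: leq_sum => d _; exact: EQ.
  rewrite exchange_big /=.
  have QP y : Q (y + n) = Q y by rewrite /Q hP -addSn hP.
  apply: (@leq_trans (\sum_(d < k) (2 * \sum_(i < n) Q i))); last first.
    by rewrite sum_nat_const card_ord mulnA (mulnC k).
  apply: leq_sum => d _; rewrite big_split /=.
  have e1 : \sum_(i < n) Q (i + d) = \sum_(i < n) Q i.
    rewrite -[RHS](@sum_shift n (fun t => nat_of_bool (Q t)) d (fun y => congr1 nat_of_bool (QP y))).
    by apply: eq_bigr => i _; rewrite addnC.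
  have e2 : \sum_(i < n) Q (i + d).+1 = \sum_(i < n) Q i.
    rewrite -[RHS](@sum_shift n (fun t => nat_of_bool (Q t)) d.+1 (fun y => congr1 nat_of_bool (QP y))).
    by apply: eq_bigr => i _; rewrite addnC addSn.
  by rewrite e1 e2 addnn mul2n.
have QM : \sum_(i < n) Q i <= \sum_(i < n) minn (h i) (h i.+1).
  apply: leq_sum => i _; rewrite /Q.
  by case: (posnP (h i)) => ?; case: (posnP (h i.+1)) => ? /=; lia.
have NN : n = \sum_(i < n) (sg i != sg (i + k)) + \sum_(i < n) (sg i == sg (i + k)).
  rewrite -big_split /= -[LHS](card_ord n) -sum1_card.
  by apply: eq_bigr => i _; case: (_ == _).
move: DM NC QM NN.
set D := \sum_(i < n) (sg i != sg (i + k)).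
set M := \sum_(i < n) minn _ _.
set C := \sum_(i < n) (sg i == sg (i + k)).
set QQ := \sum_(i < n) Q i.
rewrite /n => [[H1 H2]] H3 H4 H5.
nia.
Qed.

Lemma sum_succ (n : nat) : 2 * \sum_(i < n) i.+1 = n * n.+1.
Proof.
elim: n => [|n IH]; first by rewrite big_ord0.
by rewrite big_ord_recr /= mulnDr IH; nia.
Qed.

Lemma pval_lt (n : nat) (p : 'S_n) (x : nat) (Hx : x < n) : Defs.pval p x = (p (Ordinal Hx)).+1.
Proof.
rewrite /Defs.pval; case: insubP => [o _ Ho|]; last by rewrite modn_small // Hx.
by congr (_.+1); congr (fun_of_perm p _); apply: val_inj; rewrite /= Ho modn_small.
Qed.

Lemma pval_mod (n : nat) (p : 'S_n) (x : nat) : Defs.pval p x = Defs.pval p (x %% n).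
Proof. by rewrite /Defs.pval modn_mod. Qed.

Lemma pval_per (n : nat) (p : 'S_n) (y : nat) : Defs.pval p (y + n) = Defs.pval p y.
Proof. by rewrite /Defs.pval modnDr. Qed.

Lemma key (m k : nat) (p : 'S_(m * k)) :
  odd m -> odd k -> (3 <= k)%N -> (2 * k + 3 <= m)%N ->
  (2%:R <= msum_perm k p :> rat)%R.
Proof.
move=> mo ko k3 mk.
set n := m * k in p *.
have n0 : 0 < n by rewrite /n; nia.
have no : odd n by rewrite /n oddM mo ko.
set q := n.+1 %/ 2.
have nq : n.+1 = q * 2 by rewrite /q divnK // dvdn2 /= no.
pose f := Defs.pval p.
have fP y : f (y + n) = f y by exact: pval_per.
have finj x y : x < n -> y < n -> f x = f y -> x = y.
  move=> Hx Hy; rewrite /f !pval_lt => -[] /val_inj /perm_inj [].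
  by [].
have fN x : f x <= n.
  by rewrite /f pval_mod pval_lt ?ltn_pmod // => H; apply: ltn_ord.
have fsum : \sum_(i < n) f i = n * q.
  have -> : \sum_(i < n) f i = \sum_(i < n) (p i).+1.
    apply: eq_bigr => i _; rewrite /f pval_lt; congr (_.+1); congr (fun_of_perm p _).
    exact: val_inj.
  have E : \sum_(i < n) (nat_of_ord i).+1 = \sum_(j < n) (p j).+1.
    exact: (reindex_inj (@perm_inj _ p)).
  rewrite -E.
  have := sum_succ n; nia.
rewrite /msum_perm.
set Mx := (\max_(i < n) wsum k p i)%N.
have -> : ((((k * (n + 1))%N)%:R / 2%:R : rat) = ((k * q)%N)%:R)%R.
  by rewrite addn1 nq mulnA natrM mulfK.
case: (leqP (k * q + 2) Mx) => HM.
  by rewrite -natrB ?ler_nat; lia.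
exfalso.
apply: (@core m k q f) => //.
move=> i.
have -> : \sum_(j < k) f (i + j) = wsum k p (i %% n).
  rewrite /wsum; apply: eq_bigr => j _; rewrite /f (pval_mod _ (i %% n + j)) modnDml.
  by rewrite -pval_mod.
have := @leq_bigmax _ (fun i : 'I_n => wsum k p i) (Ordinal (ltn_pmod i n0)).
rewrite -/Mx /=; lia.
Qed.

Theorem lemma5p3 (m k : nat) :
  odd m -> odd k -> (3 <= k)%N -> (2 * k + 3 <= m)%N ->
  (2%:R <= msum (m * k) k)%R.
Proof.
move=> mo ko k3 mk; rewrite /msum.
apply: (big_ind (fun x : rat => (2%:R <= x)%R)).
- exact: key.
- by move=> x y Hx Hy; rewrite le_min Hx Hy.
- by move=> p _; exact: key.
Qed.
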